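(* Let $U(0)\geqslant 1$ and $d\geqslant 1$ be integers, $U(n)=U(0)+nd$, and let $S(n)=\overline{U(n)U(n-1)\cdots U(0)}$ (left-concatenation), so $S(0)=U(0)$. Let $n\geqslant 0$ and put $$l=\left\lceil \log_{10}(n d + S(0) + 1)\right\rceil,\qquad t_l=\left\lfloor \frac{10^{l-1}-S(0)}{d}\right\rfloor .$$ Assume $t_l\geqslant 0$ and $U(t_l+2)<10^l$. Let $p_l$ be the number of decimal digits of $S(t_l)$, let $s_0=S(t_l)$, $s_1=S(t_l+1)$, $s_2=S(t_l+2)$, and $$\alpha_l=\frac{s_2-2\cdot 10^l s_1+10^{2l}s_0}{(10^l-1)^2},\qquad \mu_l=\frac{\left((10^l-1)U(t_l)-d\right)10^{p_l}}{(10^l-1)^2},\qquad \theta_l=\frac{d\cdot 10^{p_l}}{10^l-1}.$$ Then $$S(n)=\alpha_l+\mu_l\,10^{l(n-t_l)}+\theta_l\,(n-t_l)\,10^{l(n-t_l)}.$$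
   Context: For positive integers $a_0,\ldots,a_k$, $\overline{a_0a_1\cdots a_k}$ denotes the integer whose decimal expansion is the decimal expansion of $a_0$ followed by that of $a_1$, ..., followed by that of $a_k$. Note $l$ is the number of decimal digits of $U(n)$. *)

(* Defs.v *)
From mathcomp Require Import all_boot all_order all_algebra.
Set Implicit Arguments. Unset Strict Implicit. Unset Printing Implicit Defensive.

Definition ndigits (m : nat) : nat := (trunc_log 10 m).+1.

Definition concat (a b : nat) : nat := a * 10 ^ ndigits b + b.

Definition U (U0 d n : nat) : nat := U0 + n * d.

Fixpoint Scat (U0 d n : nat) : nat :=
  match n with
  | 0 => U0
  | k.+1 => concat (U U0 d k.+1) (Scat U0 d k)
  end.

(* Main.v *)
Require Import Defs.
From mathcomp Require Import all_boot all_order all_algebra.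
From mathcomp Require Import ring lra zify.
Import Order.TTheory GRing.Theory Num.Theory.
Local Open Scope ring_scope.

Lemma closed (S : nat -> rat) (P L u dd : rat) (K : nat) : L - 1 != 0 -> (2 <= K)%N ->
  (forall k, (k < K)%N -> S k.+1 = S k + P * L^+k * (u + (k.+1)%:R * dd)) ->
  forall k, (k <= K)%N -> S k = (S 2 - 2%:R * L * S 1 + L^+2 * S 0)/(L-1)^+2
     + ((L-1)*u - dd)*P/(L-1)^+2 * L^+k + dd*P/(L-1) * k%:R * L^+k.
Proof.
move=> hL hK rec.
have h1 := rec 1%N (leq_trans (isT : (1 < 2)%N) hK).
have h0 := rec 0%N (leq_trans (isT : (0 < 2)%N) hK).
elim=> [|k IH] hk.
  rewrite h1 h0 expr0 expr1 /=. by field.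
rewrite rec // IH ?(ltnW hk) // [L ^+ k.+1]exprS [k.+1%:R]mulrS.
field; by rewrite ?expf_neq0.
Qed.

Lemma ndig_lt m : (m < 10 ^ ndigits m)%N.
Proof. exact: trunc_log_ltn. Qed.

Lemma ndig_concat a b l : (0 < l)%N -> (10 ^ l.-1 <= a < 10 ^ l)%N ->
  ndigits (concat a b) = (l + ndigits b)%N.
Proof.
move=> l0 /andP[ha1 ha2].
have hb := ndig_lt b.
rewrite /concat.
set q := ndigits b in hb *.
have e1 : (10 ^ (l.-1 + q) = 10 ^ l.-1 * 10 ^ q)%N by rewrite expnD.
have e2 : (10 ^ (l.-1 + q).+1 = 10 ^ l * 10 ^ q)%N.
  by rewrite -addSn prednK // expnD.
rewrite /ndigits (@trunc_log_eq _ (l.-1 + q)) //; last first.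
  rewrite e1 e2; apply/andP; split; first by apply: leq_trans (leq_addr _ _); rewrite leq_mul2r ha1 orbT.
  apply: (@leq_trans ((a.+1) * 10 ^ q)); first by rewrite mulSn; lia.
  by rewrite leq_mul2r ha2 orbT.
by rewrite -addSn prednK.
Qed.

Theorem theorem2 (U0 d n : nat) (hU0 : (1 <= U0)%N) (hd : (1 <= d)%N)
  (l : nat) (hl : l = up_log 10 (n * d + Scat U0 d 0 + 1))
  (t : nat)
  (ht : t%:Z = (((10 ^ l.-1)%N%:Z - (Scat U0 d 0)%:Z) %/ d%:Z)%Z)
  (hU : (U U0 d (t + 2) < 10 ^ l)%N) :
  let p := ndigits (Scat U0 d t) in
  let s0 : rat := (Scat U0 d t)%:R in
  let s1 : rat := (Scat U0 d t.+1)%:R in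
  let s2 : rat := (Scat U0 d t.+2)%:R in
  let L : rat := 10%:R ^+ l in
  let alpha := (s2 - 2%:R * L * s1 + L ^+ 2 * s0) / (L - 1) ^+ 2 in
  let mu := ((L - 1) * (U U0 d t)%:R - d%:R) * 10%:R ^+ p / (L - 1) ^+ 2 in
  let theta := d%:R * 10%:R ^+ p / (L - 1) in
  let m : int := n%:Z - t%:Z in
  (Scat U0 d n)%:R = alpha + mu * 10%:R ^ (l%:Z * m)
                    + theta * m%:~R * 10%:R ^ (l%:Z * m).
Proof.
move=> p s0 s1 s2 L alpha mu theta m.
rewrite /= in hl ht.
have hN : (1 < n * d + U0 + 1)%N by lia.
have l0 : (0 < l)%N by rewrite hl up_log_gt0 hN.
have hbb : (10 ^ l.-1 < n * d + U0 + 1 <= 10 ^ l)%N.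
  by rewrite hl; apply: up_log_bounds.
move/andP: hbb => [hb1 hb2].
have hpos : (0 <= ((10 ^ l.-1)%N%:Z - U0%:Z))%R.
  by rewrite -(@divz_ge0 _ d%:Z) ?ltz_nat // -ht.
have hU0l : (U0 <= 10 ^ l.-1)%N by rewrite -lez_nat -subr_ge0.
rewrite subzn // divz_nat in ht.
case: ht => ht.
have ht1 : (t * d <= 10 ^ l.-1 - U0)%N by rewrite ht leq_trunc_div.
have ht2 : (10 ^ l.-1 - U0 < t.+1 * d)%N by rewrite ht ltn_ceil.
have hnt : (t <= n)%N.
  have : (t * d <= n * d)%N by lia.
  by rewrite leq_pmul2r.
set K := maxn (n - t) 2.
have hUK : forall k, (k <= K)%N -> (U0 + (t + k) * d < 10 ^ l)%N.
  move=> k; rewrite /K; case: (leqP (n - t) 2) => h hk; rewrite /U in hU; nia.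
have hUlo : forall k, (0 < k)%N -> (10 ^ l.-1 <= U0 + (t + k) * d)%N.
  move=> k hk; nia.
have dig : forall k, (k <= K)%N -> ndigits (Scat U0 d (t + k)) = (p + l * k)%N.
  elim=> [|k IH] hk; first by rewrite addn0 muln0 addn0.
  rewrite addnS /= (@ndig_concat _ _ l l0); last first.
    by rewrite /U -addnS hUK // andbT; exact: hUlo.
  rewrite IH ?(ltnW hk) // mulnS; lia.
have L1 : L - 1 != 0.
  rewrite subr_eq0 /L -natrX pnatr_eq1.
  by rewrite -(expn0 10) eqn_exp2l // -lt0n.
have rec : forall k, (k < K)%N ->
  (Scat U0 d (t + k.+1))%:R = (Scat U0 d (t + k))%:R + 10%:R ^+ p * L ^+ k
      * ((U U0 d t)%:R + k.+1%:R * d%:R) :> rat.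
  move=> k hk.
  rewrite addnS /= /concat dig ?(ltnW hk) // /U.
  have -> : (U0 + (t + k).+1 * d = (U0 + t * d) + k.+1 * d)%N by lia.
  rewrite !natrD !natrM !natrX exprD exprM /L.
  ring.
have hK : (2 <= K)%N by rewrite /K leq_maxr.
have := @closed (fun k => (Scat U0 d (t + k))%:R) _ L _ _ K L1 hK rec.
move=> C.
have := C (n - t)%N (leq_maxl _ _).
rewrite subnKC // => ->.
rewrite /alpha /mu /theta /s0 /s1 /s2 addn0 addn1 addn2.
have -> : m = (n - t)%N by rewrite /m subzn.
rewrite -PoszM /= -exprM /L.
rewrite -!exprM -exprnP.
have -> : ((n - t)%N%:Z)%:~R = (n - t)%:R :> rat by [].
by [].
Qed.
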